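(* For all $\boldsymbol\upsilon,\boldsymbol\xi\in P_{II}$: $\boldsymbol\upsilon\subseteq\boldsymbol\xi$ if and only if $\mathcal D_{\boldsymbol\upsilon\text{-unc}}\subseteq\mathcal D_{\boldsymbol\xi\text{-unc}}$.
   Context: Let $n\ge1$, $L=\{1,\dots,n\}$, and for $i\in L$ let $\mathcal H_i$ be a Hilbert space with $1<\dim\mathcal H_i<\infty$; $\mathcal H_X=\bigotimes_{i\in X}\mathcal H_i$ and $\mathcal D_X$ is the set of density operators on $\mathcal H_X$. $P_I$ is the set of partitions of $L$ ordered by refinement. For $\xi\in P_I$, $\mathcal D_{\xi\text{-unc}}=\{\varrho\in\mathcal D_L:\varrho=\bigotimes_{X\in\xi}\varrho_X,\ \varrho_X\in\mathcal D_X\}$. $P_{II}$ is the set of nonempty down-sets of $(P_I,\preceq)$ (nonempty sets of partitions closed under taking finer partitions), and for $\boldsymbol\xi\in P_{II}$, $\mathcal D_{\boldsymbol\xi\text{-unc}}=\bigcup_{\xi\in\boldsymbol\xi}\mathcal D_{\xi\text{-unc}}$. *)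

(* Defs.v *)
From HB Require Import structures.
From mathcomp Require Import all_boot all_order all_algebra.
Set Implicit Arguments. Unset Strict Implicit. Unset Printing Implicit Defensive.
Import Order.TTheory GRing.Theory Num.Theory.
Local Open Scope ring_scope.

(* Subsystems are the elements of L = 'I_n; subsystem i has local dimension d i.
   A computational basis of H_X (X a subset of L) is indexed by cfg d X:
   dependent functions assigning to each i in X a basis index in 'I_(d i). *)
Definition cfg (n : nat) (d : 'I_n -> nat) (X : {set 'I_n}) : finType :=
  {dffun forall i : {i : 'I_n | i \in X}, 'I_(d (val i))}.

(* linear operators on H_X, as matrices in the computational basis *)
Definition op (C : numClosedFieldType) (T : finType) := T -> T -> C.

Definition density (C : numClosedFieldType) (T : finType) (M : op C T) : Prop :=
  (forall v : T -> C, 0 <= \sum_(a : T) \sum_(b : T) (v a)^* * M a b * v b)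
  /\ \sum_(a : T) M a a = 1.

Definition restr (n : nat) (d : 'I_n -> nat) (X : {set 'I_n})
  (a : cfg d [set: 'I_n]) : cfg d X :=
  [ffun i : {i : 'I_n | i \in X} => a (exist _ (val i) (in_setT (val i)))].

Definition is_partition (n : nat) (P : {set {set 'I_n}}) : Prop :=
  partition P [set: 'I_n].

Definition finer (n : nat) (P Q : {set {set 'I_n}}) : Prop :=
  forall A, A \in P -> exists2 B, B \in Q & A \subset B.

(* D_{xi-unc}: states of the form tensor_{X in xi} rho_X *)
Definition unc_part (C : numClosedFieldType) (n : nat) (d : 'I_n -> nat)
  (P : {set {set 'I_n}}) (rho : op C (cfg d [set: 'I_n])) : Prop :=
  density rho /\
  exists rhoX : forall X : {set 'I_n}, op C (cfg d X),
    (forall X, X \in P -> density (rhoX X)) /\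
    forall a b, rho a b = \prod_(X in P) rhoX X (restr X a) (restr X b).

(* P_II: nonempty down-sets of partitions *)
Definition is_PII (n : nat) (U : {set {set {set 'I_n}}}) : Prop :=
  (exists P, P \in U) /\
  (forall P, P \in U -> is_partition P) /\
  (forall P Q, Q \in U -> is_partition P -> finer P Q -> P \in U).

(* D_{U-unc} = union over xi in U of D_{xi-unc} *)
Definition unc_set (C : numClosedFieldType) (n : nat) (d : 'I_n -> nat)
  (U : {set {set {set 'I_n}}}) (rho : op C (cfg d [set: 'I_n])) : Prop :=
  exists2 P, P \in U & unc_part P rho.

(* Main.v *)
Require Import Defs.
From HB Require Import structures.
From mathcomp Require Import all_boot all_order all_algebra.
Set Implicit Arguments. Unset Strict Implicit. Unset Printing Implicit Defensive.
Import Order.TTheory GRing.Theory Num.Theory.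
Local Open Scope ring_scope.

Section W.
Variables (C : numClosedFieldType) (n : nat) (d : 'I_n -> nat).
Hypothesis hd : forall i, (1 < d i)%N.

Lemma diag_density (T : finType) (p : T -> C) :
  (forall a, 0 <= p a) -> \sum_a p a = 1 ->
  density (fun a b => (a == b)%:R * p a).
Proof.
move=> p0 p1; split; last first.
  by rewrite -[RHS]p1; apply: eq_bigr => a _; rewrite eqxx mul1r.
move=> v; apply: sumr_ge0 => a _.
rewrite (bigD1 a) //= big1 ?addr0 => [|b nb]; last first.
  by rewrite eq_sym (negbTE nb) mul0r mulr0 mul0r.
rewrite eqxx mul1r mulrAC mulrC; apply: mulr_ge0 => //.
by rewrite mulrC mul_conjC_ge0.
Qed.

Lemma one_point (X : {set 'I_n}) (t : cfg d X) :
  \sum_(x : cfg d X) \prod_(j : {i : 'I_n | i \in X}) ((x j == t j)%:R : C) = 1.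
Proof.
rewrite (bigD1 t) //=.
rewrite [X in _ + X = _]big1 => [|x nx].
  by rewrite addr0; apply: big1 => j _; rewrite eqxx.
case: (pickP (fun j => x j != t j)) => [j Hj | H].
  by rewrite (bigD1 j) //= (negbTE Hj) mul0r.
by case/eqP: nx; apply/ffunP => j; have /negbFE/eqP := H j.
Qed.

Definition bo (i : 'I_n) (c : bool) : 'I_(d i) :=
  if c then Ordinal (hd i) else Ordinal (ltnW (hd i)).

Lemma bo_neq i : (bo i true == bo i false) = false.
Proof. by rewrite -(inj_eq val_inj). Qed.

Definition hX (X : {set 'I_n}) (x : cfg d X) : C :=
  \sum_(c : bool) 2^-1 * \prod_(j : {i : 'I_n | i \in X}) ((x j == bo (val j) c)%:R : C).

Lemma hX_ge0 X x : 0 <= hX (X := X) x.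
Proof.
apply: sumr_ge0 => c _; apply: mulr_ge0; first by rewrite invr_ge0 ler0n.
by apply: prodr_ge0 => j _; rewrite ler0n.
Qed.

Lemma half2 : (2^-1 + 2^-1 : C) = 1.
Proof.
have h2 : (2 : C) != 0 by rewrite pnatr_eq0.
by rewrite -[X in X + _]mul1r -[X in _ + X]mul1r -mulrDl mulfV.
Qed.

Lemma hX_sum X : \sum_(x : cfg d X) hX x = 1.
Proof.
rewrite /hX exchange_big /= big_bool /= -[RHS]half2; congr (_ + _);
  rewrite -big_distrr /= -[RHS]mulr1; congr (_ * _).
  rewrite -[RHS](@one_point X [ffun j => bo (val j) true]).
  by apply: eq_bigr => x _; apply: eq_bigr => j _; rewrite ffunE.
rewrite -[RHS](@one_point X [ffun j => bo (val j) false]).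
by apply: eq_bigr => x _; apply: eq_bigr => j _; rewrite ffunE.
Qed.

Definition rX (X : {set 'I_n}) : op C (cfg d X) := fun x y => (x == y)%:R * hX x.

Lemma rX_density X : density (rX (X := X)).
Proof. exact: diag_density (@hX_ge0 X) (hX_sum X). Qed.


Definition rhoP (P : {set {set 'I_n}}) : op C (cfg d [set: 'I_n]) :=
  fun a b => \prod_(B in P) rX (restr B a) (restr B b).

Lemma sig_setT (s : {i : 'I_n | i \in [set: 'I_n]}) :
  exist _ (val s) (in_setT (val s)) = s.
Proof. by apply: val_inj. Qed.

Lemma rhoP_diag P : is_partition P -> forall a b,
  rhoP P a b = (a == b)%:R * \prod_(B in P) hX (restr B a).
Proof.
move=> /and3P[/eqP cov tri _] a b; rewrite /rhoP /rX big_split /=; congr (_ * _).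
case: (eqVneq a b) => [->|nab]; first by apply: big1 => B _; rewrite eqxx.
have [s Hs] : exists s, a s != b s.
  case: (pickP (fun s => a s != b s)) => [s Hs|H]; first by exists s.
  by case/eqP: nab; apply/ffunP => s; have /negbFE/eqP := H s.
have kc : val s \in cover P by rewrite cov in_setT.
rewrite (bigD1 (pblock P (val s))) ?pblock_mem //=.
have -> : (restr (pblock P (val s)) a == restr (pblock P (val s)) b) = false.
  apply/negbTE/eqP => e.
  move/ffunP: e => /(_ (exist _ (val s) (etrans (mem_pblock P (val s)) kc))).
  rewrite !ffunE /=; move: Hs; case: s {kc} => k pk /=.
  by rewrite (bool_irrelevance pk (in_setT k)) => Hs E; rewrite E eqxx in Hs.
by rewrite mul0r.
Qed.

Lemma rhoP_trace P : is_partition P ->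
  \sum_a \prod_(B in P) hX (restr B a) = 1.
Proof.
move=> /and3P[/eqP cov tri _].
rewrite /hX.
under eq_bigr => a _ do rewrite (big_distr_big false).
rewrite exchange_big /=.
rewrite -[RHS](_ : \prod_(B in P) \sum_(c : bool) (2^-1 : C) = 1); last first.
  by apply: big1 => B _; rewrite big_bool /= half2.
rewrite [RHS](big_distr_big false (mem P) predT (fun _ _ => (2^-1 : C))) /=.
apply: eq_bigr => f _.
under eq_bigr => a _ do rewrite big_split /=.
rewrite -big_distrr /= -[RHS]mulr1; congr (_ * _).
rewrite -[RHS](@one_point setT [ffun s => bo (val s) (f (pblock P (val s)))]).
apply: eq_bigr => a _.
pose E k := ((a (exist _ k (in_setT k)) == bo k (f (pblock P k)))%:R : C).
transitivity (\prod_(s : {x in [set: 'I_n]}) E (val s)); last first.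
  apply: eq_bigr => s _; rewrite /E ffunE; case: s => k pk /=.
  by rewrite (bool_irrelevance pk (in_setT k)).
rewrite -big_sub -cov big_trivIset //.
apply: eq_bigr => B PB; rewrite big_sub; apply: eq_bigr => j _.
by rewrite /E ffunE /= (def_pblock tri PB (valP j)).
Qed.

Lemma density_ext (T : finType) (M N : op C T) :
  (forall a b, M a b = N a b) -> density N -> density M.
Proof.
move=> e [h1 h2]; split.
  move=> v; have := h1 v; congr (_ <= _); apply: eq_bigr => a _.
  by apply: eq_bigr => b _; rewrite e.
by rewrite -h2; apply: eq_bigr => a _; rewrite e.
Qed.

Lemma rhoP_density P : is_partition P -> density (rhoP P).
Proof.
move=> hP.
apply: (@density_ext _ _ (fun a b => (a == b)%:R * \prod_(B in P) hX (restr B a))).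
  by move=> a b; rewrite rhoP_diag.
apply: diag_density; last exact: rhoP_trace.
by move=> a; apply: prodr_ge0 => B _; apply: hX_ge0.
Qed.


Lemma hX_pos X (x : cfg d X) c : (forall j, x j = bo (val j) c) -> 0 < hX x.
Proof.
move=> hx; rewrite /hX big_bool.
have t1 : forall c', 0 <= (2^-1 : C) *
    \prod_(j : {i : 'I_n | i \in X}) ((x j == bo (val j) c')%:R : C).
  move=> c'; apply: mulr_ge0; first by rewrite invr_ge0 ler0n.
  by apply: prodr_ge0 => j _; rewrite ler0n.
have t2 : (2^-1 : C) *
    \prod_(j : {i : 'I_n | i \in X}) ((x j == bo (val j) c)%:R : C) = 2^-1.
  by rewrite big1 ?mulr1 // => j _; rewrite hx eqxx.
have h2 : (0 : C) < 2^-1 by rewrite invr_gt0 ltr0n.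
by case: c hx t2 => hx t2; rewrite t2; [apply: ltr_wpDr | apply: ltr_wpDl].
Qed.

Lemma hX_zero B (x : cfg d B) i j (iB : i \in B) (jB : j \in B) :
  x (exist _ i iB) = bo i true -> x (exist _ j jB) = bo j false -> hX x = 0.
Proof.
move=> hi hj; rewrite /hX big_bool.
have -> : \prod_(k : {i : 'I_n | i \in B}) ((x k == bo (val k) true)%:R : C) = 0.
  by rewrite (bigD1 (exist _ j jB)) //= hj eq_sym bo_neq mul0r.
have -> : \prod_(k : {i : 'I_n | i \in B}) ((x k == bo (val k) false)%:R : C) = 0.
  by rewrite (bigD1 (exist _ i iB)) //= hi bo_neq mul0r.
by rewrite !mulr0 /= addr0.
Qed.

Lemma sep P Q : is_partition P -> is_partition Q -> unc_part Q (rhoP P) -> finer P Q.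
Proof.
move=> hP hQ [_ [s [sd e]]] B PB.
have /and3P[/eqP covQ triQ _] := hQ.
have /and3P[/eqP covP triP nz0] := hP.
have : B != set0 by apply: contraNneq nz0 => <-.
case/set0Pn => i iB.
have iQ : i \in cover Q by rewrite covQ in_setT.
set Y1 := pblock Q i.
have Y1Q : Y1 \in Q := pblock_mem iQ.
have iY1 : i \in Y1 by rewrite mem_pblock.
case sub: (B \subset Y1); first by exists Y1.
have /subsetPn [j jB jY] := negbT sub.
pose z : cfg d [set: 'I_n] := [ffun s => bo (val s) false].
pose o : cfg d [set: 'I_n] := [ffun s => bo (val s) true].
pose m : cfg d [set: 'I_n] := [ffun s => bo (val s) (val s \in Y1)].
have rz : rhoP P z z != 0.
  rewrite rhoP_diag // eqxx mul1r; apply/prodf_neq0 => B' _; rewrite gt_eqF //.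
  by apply: (@hX_pos _ _ false) => k; rewrite !ffunE.
have ro : rhoP P o o != 0.
  rewrite rhoP_diag // eqxx mul1r; apply/prodf_neq0 => B' _; rewrite gt_eqF //.
  by apply: (@hX_pos _ _ true) => k; rewrite !ffunE.
have rm : rhoP P m m = 0.
  rewrite rhoP_diag // eqxx mul1r (bigD1 B) //= (@hX_zero _ _ i j iB jB) ?mul0r //.
    by rewrite !ffunE /= iY1.
  by rewrite !ffunE /= (negbTE jY).
move: rz ro rm; rewrite !e => /prodf_neq0 sz /prodf_neq0 so.
rewrite (bigD1 Y1) //=.
have -> : restr Y1 m = restr Y1 o.
  by apply/ffunP => k; rewrite !ffunE /= (valP k).
rewrite (eq_bigr (fun Y => s Y (restr Y z) (restr Y z))); last first.
  move=> Y /andP[YQ nY].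
  have -> : restr Y m = restr Y z; last by [].
  apply/ffunP => k; rewrite !ffunE /=.
  suff -> : (val k \in Y1) = false by [].
  apply/negbTE/negP => kY1; case/eqP: nY.
  by rewrite -(def_pblock triQ YQ (valP k)) (def_pblock triQ Y1Q kY1).
move/eqP; rewrite mulf_eq0 (negbTE (so Y1 Y1Q)) /=.
have -> : (\prod_(Y in Q | Y != Y1) s Y (restr Y z) (restr Y z) == 0) = false.
  by apply/negbTE/prodf_neq0 => Y /andP[YQ _]; apply: sz.
by [].
Qed.

End W.

Theorem mainTheorem17 (C : numClosedFieldType) (n : nat) (hn : (0 < n)%N)
  (d : 'I_n -> nat) (hd : forall i, (1 < d i)%N)
  (U X : {set {set {set 'I_n}}}) :
  is_PII U -> is_PII X ->
  (U \subset X <->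
   (forall rho : op C (cfg d [set: 'I_n]), unc_set U rho -> unc_set X rho)).
Proof.
move=> hU hX; split.
  by move=> sub rho [P PU h]; exists P => //; exact: (subsetP sub).
move=> H; apply/subsetP => P PU.
have hP := hU.2.1 P PU.
have : unc_set U (@rhoP C n d hd P).
  exists P => //; split; first exact: rhoP_density.
  exists (fun Y => @rX C n d hd Y); split => // Y _; exact: rX_density.
case/H => Q QX hQ.
apply: (hX.2.2 P Q QX hP); apply: sep hQ => //; exact: hX.2.1.
Qed.
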